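(* Let $(Z,\tau)$ be a topological space with a countable basis of open sets. For every $R>0$ let $f_R,\,g_R:Z\to\mathbb{R}$ be upper semicontinuous functions such that $$f_R\le g_R\le f_{R+\epsilon}\quad\text{on } Z\qquad\text{for all } R>0,\ \epsilon>0.$$ Then the set of $R>0$ for which $f_R\not\equiv g_R$ on $Z$ is at most countable. *)

(* Defs.v *)
From Stdlib Require Import Reals.
Open Scope R_scope.

Record topology (Z : Type) : Type := {
  is_open : (Z -> Prop) -> Prop;
  open_empty : is_open (fun _ => False);
  open_full : is_open (fun _ => True);
  open_union : forall (I : Type) (U : I -> Z -> Prop),
      (forall i, is_open (U i)) -> is_open (fun z => exists i, U i z);
  open_inter : forall U V, is_open U -> is_open V ->
      is_open (fun z => U z /\ V z)
}.
Arguments is_open {Z} t U.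

Definition second_countable {Z : Type} (t : topology Z) : Prop :=
  exists B : nat -> Z -> Prop,
    (forall n, is_open t (B n)) /\
    (forall U, is_open t U -> forall z, U z ->
       exists n, B n z /\ (forall y, B n y -> U y)).

Definition usc {Z : Type} (t : topology Z) (f : Z -> R) : Prop :=
  forall a : R, is_open t (fun z => f z < a).

Definition at_most_countable (S : R -> Prop) : Prop :=
  exists h : R -> nat, forall x y, S x -> S y -> h x = h y -> x = y.

(* Main.v *)
Require Import Defs.
From Stdlib Require Import Reals.
From Stdlib Require Import Lra Lia ZArith Cantor ClassicalEpsilon Classical.
Open Scope R_scope.

Definition decode (k : nat) : nat * R :=
  let (n, r) := Cantor.of_nat k in
  let (a, r2) := Cantor.of_nat r in
  let (b, c) := Cantor.of_nat r2 in
  (n, (INR a - INR b) / INR (S c)).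

Lemma decode_surj n a b c :
  decode (Cantor.to_nat (n, Cantor.to_nat (a, Cantor.to_nat (b, c))))
  = (n, (INR a - INR b) / INR (S c)).
Proof. unfold decode. rewrite !cancel_of_to. reflexivity. Qed.

Lemma IZR_split m : IZR m = INR (Z.to_nat m) - INR (Z.to_nat (- m)).
Proof.
  assert (H : (Z.of_nat (Z.to_nat m) - Z.of_nat (Z.to_nat (- m)) = m)%Z) by lia.
  rewrite !INR_IZR_INZ, <- minus_IZR, H. reflexivity.
Qed.

Lemma dense x y : x < y -> exists a b c, x < (INR a - INR b) / INR (S c) < y.
Proof.
  intros Hxy.
  destruct (archimed_cor1 (y - x)) as [N [HN HN0]]; [lra|].
  destruct N as [|c]; [lia|].
  pose (m := up (x * INR (S c))).
  destruct (archimed (x * INR (S c))) as [H1 H2].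
  exists (Z.to_nat m), (Z.to_nat (- m)), c.
  rewrite <- IZR_split. fold m in H1, H2.
  assert (Hp : 0 < INR (S c)) by (apply lt_0_INR; lia).
  split.
  - apply (Rmult_lt_reg_r (INR (S c))); [lra|].
    unfold Rdiv. rewrite Rmult_assoc, Rinv_l; lra.
  - apply (Rmult_lt_reg_r (INR (S c))); [lra|].
    unfold Rdiv. rewrite Rmult_assoc, Rinv_l by lra.
    assert (Hq : / INR (S c) * INR (S c) < (y - x) * INR (S c))
      by (apply Rmult_lt_compat_r; lra).
    rewrite Rinv_l in Hq by lra. lra.
Qed.

Theorem lemma2p1 (Z : Type) (t : topology Z) (f g : R -> Z -> R) :
  second_countable t ->
  (forall R0, 0 < R0 -> usc t (f R0) /\ usc t (g R0)) ->
  (forall R0 eps, 0 < R0 -> 0 < eps -> forall z : Z,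
      f R0 z <= g R0 z /\ g R0 z <= f (R0 + eps) z) ->
  at_most_countable (fun R0 => 0 < R0 /\ exists z : Z, f R0 z <> g R0 z).
Proof.
  intros [B [HBo HB]] Husc Hle.
  pose (good := fun R0 k =>
    (forall y, B (fst (decode k)) y -> f R0 y < snd (decode k)) /\
    exists z, B (fst (decode k)) z /\ snd (decode k) < g R0 z).
  assert (Hex : forall R0, 0 < R0 /\ (exists z, f R0 z <> g R0 z) ->
                exists k, good R0 k).
  { intros R0 [HR [z Hz]].
    assert (Hlt : f R0 z < g R0 z).
    { destruct (Hle R0 1 HR Rlt_0_1 z) as [H _]. lra. }
    destruct (dense _ _ Hlt) as [a [b [c [Hq1 Hq2]]]].
    destruct (Husc R0 HR) as [Hf _].
    destruct (HB _ (Hf ((INR a - INR b) / INR (S c))) z Hq1) as [n [Hn Hsub]].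
    exists (Cantor.to_nat (n, Cantor.to_nat (a, Cantor.to_nat (b, c)))).
    unfold good. rewrite decode_surj. simpl. split.
    - exact Hsub.
    - exists z. split; assumption. }
  assert (Hcontra : forall x y k, 0 < x -> x < y -> good x k -> good y k -> False).
  { intros x y k Hx Hxy [_ [z [Hz Hgz]]] [Hfy _].
    specialize (Hfy z Hz).
    destruct (Hle x (y - x) Hx ltac:(lra) z) as [_ H].
    replace (x + (y - x)) with y in H by ring. lra. }
  exists (fun R0 => epsilon (inhabits 0%nat) (good R0)).
  intros x y Sx Sy Heq.
  pose proof (epsilon_spec (inhabits 0%nat) (good x) (Hex x Sx)) as Gx.
  pose proof (epsilon_spec (inhabits 0%nat) (good y) (Hex y Sy)) as Gy.
  rewrite Heq in Gx.
  destruct Sx as [Hx _]. destruct Sy as [Hy _].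
  destruct (Rtotal_order x y) as [H|[H|H]].
  - exfalso. exact (Hcontra _ _ _ Hx H Gx Gy).
  - exact H.
  - exfalso. exact (Hcontra _ _ _ Hy H Gy Gx).
Qed.
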